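(* Let $G$ be a tree with vertices $1,2,\ldots,n$ and edges $e_1,\ldots,e_{n-1}$, and let $M$ be its $n\times(n-1)$ vertex-edge incidence matrix. Define the $(n-1)\times n$ matrix $H=[h_{i,j}]$ (rows indexed by edges, columns by vertices) by $$h_{i,j}=\frac{(-1)^{d(e_i,j)}}{n}\begin{cases}|G_T(e_i)| & \text{if } j\in G_H(e_i),\\ |G_H(e_i)| & \text{if } j\in G_T(e_i).\end{cases}$$ Then $HM=I_{n-1}$.
   Context: Each edge is written $e_i=\{l_i,m_i\}$ with $l_i<m_i$. The incidence matrix $M$ has $(i,j)$-entry $1$ if vertex $i$ is incident with edge $e_j$ and $0$ otherwise. $d(u,v)$ denotes the usual graph distance between vertices; for a vertex $j$ and edge $e_i=\{l_i,m_i\}$, $d(j,e_i)=d(e_i,j):=\min\{d(j,l_i),d(j,m_i)\}$. The head component $G_H(e_i)$ is the connected component of $G\setminus e_i$ containing $m_i$; the tail component $G_T(e_i)$ is the component of $G\setminus e_i$ containing $l_i$. $|X|$ denotes the number of vertices of a graph $X$. *)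

(* Defs.v *)
From mathcomp Require Import all_boot all_order all_algebra.
Set Implicit Arguments. Unset Strict Implicit. Unset Printing Implicit Defensive.
Import Order.TTheory GRing.Theory Num.Theory.

(* A graph on vertex set 'I_N given by an edge list e : 'I_k -> 'I_N * 'I_N,
   edge e_i = {l_i, m_i} with l_i = (e i).1 < m_i = (e i).2. *)
Section Graph.
Variables (N k : nat) (e : 'I_k -> 'I_N * 'I_N).

Definition edge_joins (i : 'I_k) (u v : 'I_N) : bool :=
  ((u == (e i).1) && (v == (e i).2)) || ((u == (e i).2) && (v == (e i).1)).

Definition adj : rel 'I_N := fun u v => [exists i, edge_joins i u v].

Definition adj_del (j : 'I_k) : rel 'I_N :=
  fun u v => [exists i, (i != j) && edge_joins i u v].

Fixpoint reach (r : nat) (u v : 'I_N) : bool :=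
  if r is r'.+1 then reach r' u v || [exists w, reach r' u w && adj w v]
  else u == v.

(* graph distance d(u,v): least r with reach r u v (finite graph, connected
   case: this is < N) *)
Definition dist (u v : 'I_N) : nat := find (fun r => reach r u v) (iota 0 N).

Definition dist_ve (j : 'I_N) (i : 'I_k) : nat :=
  minn (dist j (e i).1) (dist j (e i).2).

Definition head_comp (i : 'I_k) : {set 'I_N} :=
  [set v | connect (adj_del i) (e i).2 v].
Definition tail_comp (i : 'I_k) : {set 'I_N} :=
  [set v | connect (adj_del i) (e i).1 v].

(* (G, e) is a tree: edges are written with l_i < m_i, they are pairwise
   distinct, the graph is connected, and there are N-1 of them (k.+1 = N,
   enforced in the theorem by the types). *)
Definition is_tree_edges : Prop :=
  [/\ forall i, (e i).1 < (e i).2, injective e & forall u v, connect adj u v].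

Local Open Scope ring_scope.
Definition incidence (R : pzRingType) : 'M[R]_(N, k) :=
  \matrix_(v, j) (nat_of_bool ((v == (e j).1) || (v == (e j).2)))%:R.

Definition Hmat (R : numFieldType) : 'M[R]_(k, N) :=
  \matrix_(i, j)
    ((-1) ^+ dist_ve j i / (N%:R : R) *
     (if j \in head_comp i then #|tail_comp i|%:R
      else if j \in tail_comp i then #|head_comp i|%:R else 0)).
End Graph.

(* Main.v *)
Require Import Defs.
From mathcomp Require Import all_boot all_order all_algebra zify.
Set Implicit Arguments. Unset Strict Implicit. Unset Printing Implicit Defensive.
Import GRing.Theory Num.Theory.

Section Generic.
Variables (T : finType) (g : rel T).

Fixpoint greach (r : nat) (u v : T) : bool :=
  if r is r'.+1 then greach r' u v || [exists w, greach r' u w && g w v]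
  else u == v.

Lemma greach_mono m r u v : m <= r -> greach m u v -> greach r u v.
Proof.
move=> le; elim: r le => [|r IH]; first by rewrite leqn0 => /eqP ->.
rewrite leq_eqVlt => /orP [/eqP -> //| lt] h /=.
by rewrite (IH lt h).
Qed.

Lemma greach_path x p : path g x p -> greach (size p) x (last x p).
Proof.
elim/last_ind: p => [|p y IH] /=; first by [].
rewrite rcons_path last_rcons size_rcons => /andP [hp hl] /=.
apply/orP; right; apply/existsP; exists (last x p); by rewrite IH.
Qed.

Lemma greach_connect r u v : greach r u v -> connect g u v.
Proof.
elim: r v => [|r IH] v /=; first by move/eqP ->.
case/orP; first exact: IH.
case/existsP => w /andP [h1 h2]; exact: connect_trans (IH _ h1) (connect1 h2).
Qed.

Lemma connect_greach u v : connect g u v -> exists2 r, r < #|T| & greach r u v.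
Proof.
case/connectP => p hp ->.
case: (shortenP hp) => p' hp' hu _.
exists (size p'); last exact: greach_path.
by move/card_uniqP: hu => /= <-; apply: max_card.
Qed.

Hypothesis gsym : symmetric g.

Lemma greach_cons r u w v : g u w -> greach r w v -> greach r.+1 u v.
Proof.
move=> guw; elim: r v => [|r IH] v /=.
  move/eqP => <-; apply/orP; right; apply/existsP; exists u; by rewrite eqxx.
case/orP => [h|].
  exact: (greach_mono (leqnSn _) (IH _ h)).
case/existsP => x /andP [h1 h2].
apply/orP; right; apply/existsP; exists x; apply/andP; split=> //.
exact: IH.
Qed.

Lemma greach_sym r u v : greach r u v -> greach r v u.
Proof.
elim: r u v => [|r IH] u v /=; first by rewrite eq_sym.
case/orP => [h|]; first by rewrite IH.
case/existsP => w /andP [h1 h2].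
apply: (@greach_cons r v w u); first by rewrite gsym.
exact: IH.
Qed.
End Generic.

Section Tree.
Variables (n : nat) (e : 'I_n -> 'I_n.+1 * 'I_n.+1).
Hypothesis tree : is_tree_edges e.

Notation adj := (adj e).
Notation adj_del := (adj_del e).
Notation dist := (dist e).

Lemma edge_joins_sym i u v : edge_joins e i u v = edge_joins e i v u.
Proof. by rewrite /edge_joins orbC; congr (_ || _); rewrite andbC. Qed.

Lemma adj_sym : symmetric adj.
Proof.
move=> u v; apply/existsP/existsP => -[i h]; exists i; by rewrite edge_joins_sym.
Qed.

Lemma adj_del_sym i : symmetric (adj_del i).
Proof.
move=> u v; apply/existsP/existsP => -[j h]; exists j; by rewrite edge_joins_sym.
Qed.

Lemma reach_greach r u v : reach e r u v = greach adj r u v.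
Proof.
elim: r u v => [|r IH] u v //=.
Qed.

Lemma dist_le r u v : greach adj r u v -> dist u v <= r.
Proof.
rewrite -reach_greach => h.
rewrite /Defs.dist; case: (ltnP r n.+1) => hr.
  rewrite leqNgt; apply/negP => /(before_find 0).
  by rewrite nth_iota // add0n h.
apply: leq_trans hr; rewrite -[X in _ <= X](size_iota 0 n.+1); exact: find_size.
Qed.

Lemma dist_reach u v : greach adj (dist u v) u v.
Proof.
have [_ _ conn] := tree.
have [r hr h] := connect_greach (conn u v).
rewrite card_ord in hr.
have hs : has (fun r => reach e r u v) (iota 0 n.+1).
  apply/hasP; exists r; first by rewrite mem_iota.
  by rewrite reach_greach.
have := nth_find 0 hs; rewrite -reach_greach /Defs.dist.
by rewrite nth_iota ?add0n // -[X in _ < X](size_iota 0 n.+1) -has_find.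
Qed.

Lemma dist_sym u v : dist u v = dist v u.
Proof.
apply/eqP; rewrite eqn_leq; apply/andP; split; apply: dist_le;
  apply: greach_sym (adj_sym) _ _ _ _; exact: dist_reach.
Qed.

Lemma dist0 u : dist u u = 0.
Proof. apply/eqP; rewrite -leqn0; apply: (@dist_le 0); exact: eqxx. Qed.


Lemma in_head i v : (v \in head_comp e i) = connect (adj_del i) (e i).2 v.
Proof. by rewrite inE. Qed.
Lemma in_tail i v : (v \in tail_comp e i) = connect (adj_del i) (e i).1 v.
Proof. by rewrite inE. Qed.

Lemma adj_cases i a b : adj a b -> adj_del i a b \/ edge_joins e i a b.
Proof.
case/existsP => f h; case: (eqVneq f i) => [<-|ne]; first by right.
by left; apply/existsP; exists f; rewrite ne.
Qed.

Lemma cover i v : (v \in head_comp e i) || (v \in tail_comp e i).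
Proof.
have [_ _ conn] := tree.
case/connectP: (conn (e i).1 v) => p hp ->.
have S0 : ((e i).1 \in head_comp e i) || ((e i).1 \in tail_comp e i).
  by rewrite in_tail connect0 orbT.
elim: p (e i).1 S0 hp => [|y p IH] x Sx //= /andP [hxy hp].
apply: IH hp.
case: (adj_cases i hxy) => [hd|ej].
  rewrite !in_head !in_tail in Sx *.
  by case/orP: Sx => c; rewrite (connect_trans c (connect1 hd)) ?orbT.
rewrite in_head in_tail.
by case/orP: ej => /andP [_ /eqP ->]; rewrite connect0 ?orbT.
Qed.

Lemma count_contra i root : ~ (forall v, connect (adj_del i) root v).
Proof.
move=> conn.
have Hex : forall v, exists r, greach (adj_del i) r root v.
  by move=> v; have [r _ h] := connect_greach (conn v); exists r.
pose h v := ex_minn (Hex v).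
have hmin : forall r v, greach (adj_del i) r root v -> h v <= r.
  by move=> r v hr; rewrite /h; case: ex_minnP => m _ /(_ r hr).
have hreach : forall v, greach (adj_del i) (h v) root v.
  by move=> v; rewrite /h; case: ex_minnP.
have par : forall v, v != root ->
    exists f, (f != i) && [exists w, edge_joins e f w v && (h w < h v)].
  move=> v nv; have := hreach v; case eq: (h v) => [|r] /=.
    by rewrite eq_sym (negbTE nv).
  case/orP => [hr|]; first by have := hmin _ _ hr; rewrite eq ltnn.
  case/existsP => w /andP [hw /existsP [f /andP [nf ej]]].
  exists f; rewrite nf /=; apply/existsP; exists w; rewrite ej /=.
  by have := hmin _ _ hw; rewrite ltnS.
pose phi v := odflt i [pick f | (f != i) && [exists w, edge_joins e f w v && (h w < h v)]].
have phiP : forall v, v != root ->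
    (phi v != i) && [exists w, edge_joins e (phi v) w v && (h w < h v)].
  move=> v nv; rewrite /phi; case: pickP => [f -> //|none].
  by have [f hf] := par v nv; rewrite none in hf.
have inj : {in [set~ root] &, injective phi}.
  move=> v v'; rewrite !in_setC1 => nv nv' eqp.
  have /andP [_ /existsP [w /andP [ej hw]]] := phiP v nv.
  have /andP [_ /existsP [w' /andP [ej' hw']]] := phiP v' nv'.
  rewrite -eqp in ej'.
  move: ej ej' hw hw'; rewrite /edge_joins; generalize (phi v) => f.
  by case/orP => /andP [/eqP -> /eqP ->]; case/orP => /andP [/eqP -> /eqP ->] //; lia.
have sub : phi @: [set~ root] \subset [set~ i].
  apply/subsetP => f /imsetP [v]; rewrite !in_setC1 => nv ->.
  by case/andP: (phiP v nv).
have := subset_leq_card sub; rewrite card_in_imset // !cardsC1 !card_ord.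
have := ltn_ord i; lia.
Qed.

Lemma no_conn i : ~~ connect (adj_del i) (e i).1 (e i).2.
Proof.
apply/negP => c; apply: (count_contra (i:=i) (root:=(e i).1)) => v.
case/orP: (cover i v); rewrite ?in_head ?in_tail => // H.
exact: connect_trans c H.
Qed.

Lemma disj i v : v \in head_comp e i -> v \notin tail_comp e i.
Proof.
rewrite in_head in_tail => H1; apply/negP => H2.
have := no_conn i; rewrite (connect_trans H2) //.
by rewrite (sym_connect_sym (adj_del_sym i)).
Qed.

Lemma head_m i : (e i).2 \in head_comp e i.
Proof. by rewrite in_head connect0. Qed.
Lemma tail_l i : (e i).1 \in tail_comp e i.
Proof. by rewrite in_tail connect0. Qed.

Lemma cross (S : {set 'I_n.+1}) x :
  (forall a b, a \in S -> adj a b -> b \notin S -> a = x) ->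
  forall r u v, u \in S -> greach adj r u v -> v \notin S -> greach adj r.-1 u x.
Proof.
move=> bnd r u v uS; elim: r v => [|r IH] v /=.
  by move/eqP => <-; rewrite uS.
case/orP => [hr vS|/existsP [w /andP [hw hwv]] vS].
  by apply: greach_mono (IH _ hr vS); case: r {IH hr}.
case: (boolP (w \in S)) => wS.
  by rewrite -(bnd _ _ wS hwv vS).
by apply: greach_mono (IH _ hw wS); case: r {IH hw}.
Qed.

Lemma bnd_tail i a b : a \in tail_comp e i -> adj a b -> b \notin tail_comp e i ->
  a = (e i).1.
Proof.
move=> aS /(adj_cases i) [hd|ej] bS.
  by move: bS; rewrite !in_tail in aS *; rewrite (connect_trans aS (connect1 hd)).
case/orP: ej => /andP [/eqP -> /eqP Hb] //.
by move: bS; rewrite Hb tail_l.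
Qed.

Lemma bnd_head i a b : a \in head_comp e i -> adj a b -> b \notin head_comp e i ->
  a = (e i).2.
Proof.
move=> aS /(adj_cases i) [hd|ej] bS.
  by move: bS; rewrite !in_head in aS *; rewrite (connect_trans aS (connect1 hd)).
case/orP: ej => /andP [/eqP -> /eqP Hb] //.
by move: bS; rewrite Hb head_m.
Qed.

Lemma adj_lm i : adj (e i).1 (e i).2.
Proof. by apply/existsP; exists i; rewrite /edge_joins !eqxx. Qed.

Lemma D1_tail i v : v \in tail_comp e i -> dist v (e i).2 = (dist v (e i).1).+1.
Proof.
move=> vS; apply/eqP; rewrite eqn_leq; apply/andP; split.
  apply: dist_le => /=; apply/orP; right; apply/existsP; exists (e i).1.
  by rewrite dist_reach adj_lm.
have mS : (e i).2 \notin tail_comp e i by apply: disj; apply: head_m.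
have := cross (@bnd_tail i) vS (dist_reach v (e i).2) mS.
case eq: (dist v (e i).2) => [|d] /=.
  by move=> _; move: (dist_reach v (e i).2); rewrite eq /= => /eqP Hv; move: mS; rewrite -Hv vS.
by move/dist_le.
Qed.

Lemma D1_head i v : v \in head_comp e i -> dist v (e i).1 = (dist v (e i).2).+1.
Proof.
move=> vS; apply/eqP; rewrite eqn_leq; apply/andP; split.
  apply: dist_le => /=; apply/orP; right; apply/existsP; exists (e i).2.
  by rewrite dist_reach adj_sym adj_lm.
have mS : (e i).1 \notin head_comp e i.
  by apply/negP => H; move: (disj H); rewrite tail_l.
have := cross (@bnd_head i) vS (dist_reach v (e i).1) mS.
case eq: (dist v (e i).1) => [|d] /=.
  by move=> _; move: (dist_reach v (e i).1); rewrite eq /= => /eqP Hv; move: mS; rewrite -Hv vS.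
by move/dist_le.
Qed.

End Tree.

Local Open Scope ring_scope.

Lemma sign_cancel (R : numFieldType) (a b : nat) (x : R) :
  (a = b.+1 \/ b = a.+1)%N -> (-1) ^+ a * x + (-1) ^+ b * x = 0.
Proof.
by case=> ->; rewrite exprS mulN1r mulNr ?addNr ?addrN.
Qed.

Theorem mainTheorem1 (R : numFieldType) (n : nat)
    (e : 'I_n -> 'I_n.+1 * 'I_n.+1) :
  is_tree_edges e ->
  Hmat e R *m incidence e R = 1%:M.
Proof.
move=> tree; have [lt einj conn] := tree.
apply/matrixP => i j; rewrite [LHS]mxE.
have neLM : (e j).1 != (e j).2 by rewrite neq_ltn lt.
rewrite (bigD1 (e j).1) // (bigD1 (e j).2) /=; last by rewrite eq_sym.
rewrite big1; last first.
  move=> v /andP [n1 n2]; rewrite [incidence _ _ _ _]mxE.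
  by rewrite (negbTE n1) (negbTE n2) mulr0.
rewrite ![incidence _ _ _ _]mxE eqxx (negbTE neLM) eqxx orbT /= !mulr1 addr0.
rewrite !mxE.
have cov := cover tree.
have dsj := disj tree.
have notH : forall v, v \in tail_comp e i -> v \notin head_comp e i.
  by move=> v vT; apply/negP => /dsj; rewrite vT.
case: (eqVneq i j) => [<-|ne] /=.
  have d1 : dist_ve e (e i).1 i = 0%N by rewrite /dist_ve dist0 min0n.
  have d2 : dist_ve e (e i).2 i = 0%N by rewrite /dist_ve dist0 minn0.
  rewrite d1 d2 (negbTE (notH _ (tail_l e i))) tail_l head_m !expr0 !mul1r.
  rewrite -mulrDr -natrD.
  have -> : (#|head_comp e i| + #|tail_comp e i| = n.+1)%N.
    have hU : head_comp e i :|: tail_comp e i = setT.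
      by apply/setP => v; rewrite !inE -!in_head -!in_tail cov.
    have hI : head_comp e i :&: tail_comp e i = set0.
      apply/setP => v; rewrite !inE; apply/negP => /andP [h t].
      by move: (dsj i v); rewrite !in_head !in_tail h t => /(_ isT).
    by have := cardsU (head_comp e i) (tail_comp e i); rewrite hU hI cards0 subn0 cardsT card_ord.
  by rewrite mulVf // pnatr_eq0.
have hd : adj_del e i (e j).1 (e j).2.
  by apply/existsP; exists j; rewrite eq_sym ne /edge_joins !eqxx.
case/orP: (cov i (e j).1) => [hL|tL].
  have hM : (e j).2 \in head_comp e i.
    by move: hL; rewrite !in_head => c; rewrite (connect_trans c (connect1 hd)).
  rewrite hL hM -!mulrA.
  have dv : forall v, v \in head_comp e i -> dist_ve e v i = dist e v (e i).2.
    by move=> v vH; rewrite /dist_ve (D1_head tree vH) minnC; apply/minn_idPl.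
  rewrite (dv _ hL) (dv _ hM); apply: sign_cancel.
  rewrite (dist_sym tree (e j).1) (dist_sym tree (e j).2).
  case/orP: (cov j (e i).2) => [h|t].
    by left; rewrite (D1_head tree h).
  by right; rewrite (D1_tail tree t).
have tM : (e j).2 \in tail_comp e i.
  by move: tL; rewrite !in_tail => c; rewrite (connect_trans c (connect1 hd)).
rewrite (negbTE (notH _ tL)) (negbTE (notH _ tM)) tL tM -!mulrA.
have dv : forall v, v \in tail_comp e i -> dist_ve e v i = dist e v (e i).1.
  by move=> v vT; rewrite /dist_ve (D1_tail tree vT); apply/minn_idPl.
rewrite (dv _ tL) (dv _ tM); apply: sign_cancel.
rewrite (dist_sym tree (e j).1) (dist_sym tree (e j).2).
case/orP: (cov j (e i).1) => [h|t].
  by left; rewrite (D1_head tree h).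
by right; rewrite (D1_tail tree t).
Qed.
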